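(* Let $x,\tilde x\in(-1,0)$ and $y\in(x,-x)$. Set $\Delta t=p_{1,-1}(\tilde x)-p_{1,-1}(x)$ and $\Delta\theta=p_{0,-1}(\tilde x)-p_{0,-1}(x)$. Then $$p_{\tilde x,-\tilde x}\Big(p_{\tilde x,1}^{-1}\big(p_{x,1}(y)+\Delta\theta\big)\Big)-p_{x,-x}(y)=\Delta t.$$
   Context: For real $p\neq q$ and $w$ strictly between $p$ and $q$ (oriented interval $(p,q)$, $p>q$ allowed), $p_{p,q}(w)=\ln\frac{w-p}{q-w}$, a bijection onto $\mathbb{R}$ with inverse $p_{p,q}^{-1}$. *)

(* Defs.v *)
From Stdlib Require Import Reals.
Open Scope R_scope.

(* p_{p,q}(w) = ln((w - p)/(q - w)), meaningful for w strictly between p and q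
   (oriented interval, p > q allowed). *)
Definition pmap (p q w : R) : R := ln ((w - p) / (q - w)).

(* Its inverse R -> (p,q): solving ln((w-p)/(q-w)) = s gives
   w = (p + e^s q) / (1 + e^s). *)
Definition pmap_inv (p q s : R) : R := (p + exp s * q) / (1 + exp s).

(* Main.v *)
Require Import Defs.
From Stdlib Require Import Reals Lra Psatz Field.
Open Scope R_scope.

Lemma lnsub a b : 0 < a -> 0 < b -> ln a - ln b = ln (a / b).
Proof. intros; unfold Rdiv; rewrite ln_mult, ln_Rinv; try apply Rinv_0_lt_compat; auto; ring. Qed.

Theorem proposition2p4 (x xt y : R) :
  -1 < x < 0 -> -1 < xt < 0 -> x < y < - x ->
  let dt := pmap 1 (-1) xt - pmap 1 (-1) x in
  let dth := pmap 0 (-1) xt - pmap 0 (-1) x in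
  pmap xt (- xt) (pmap_inv xt 1 (pmap x 1 y + dth)) - pmap x (- x) y = dt.
Proof.
  intros [H1 H2] [H3 H4] [H5 H6] dt dth. unfold dt, dth, pmap, pmap_inv.
  assert (Ha : 0 < (y - x) / (1 - y)) by (apply Rdiv_lt_0_compat; lra).
  assert (Hb : 0 < (xt - 0) / (-1 - xt)) by (replace ((xt - 0) / (-1 - xt)) with ((-xt)/(1+xt)) by (field; lra); apply Rdiv_lt_0_compat; lra).
  assert (Hc : 0 < (x - 0) / (-1 - x)) by (replace ((x - 0) / (-1 - x)) with ((-x)/(1+x)) by (field; lra); apply Rdiv_lt_0_compat; lra).
  rewrite (lnsub _ _ Hb Hc), <- ln_mult, exp_ln; try apply Rmult_lt_0_compat; auto;
    try (apply Rdiv_lt_0_compat; auto).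
  set (E := (y - x) / (1 - y) * ((xt - 0) / (-1 - xt) / ((x - 0) / (-1 - x)))).
  assert (HE : 0 < E) by (unfold E; apply Rmult_lt_0_compat; auto; apply Rdiv_lt_0_compat; auto).
  assert (P1 : 0 < ((xt + E * 1) / (1 + E) - xt) / (- xt - (xt + E * 1) / (1 + E))).
  { apply Rdiv_lt_0_compat.
    - replace ((xt + E * 1) / (1 + E) - xt) with (E * (1 - xt) / (1 + E)) by (field; lra).
      apply Rdiv_lt_0_compat; [apply Rmult_lt_0_compat|]; lra.
    -
      replace (- xt - (xt + E * 1) / (1 + E)) with (xt * (x + y) * (1 - x) / ((1 + E) * (1-y) * (-x))) .
      + apply Rdiv_lt_0_compat. 2: { apply Rmult_lt_0_compat; [apply Rmult_lt_0_compat|]; lra. }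
        apply Rmult_lt_0_compat; nra.
      + assert (1 + E <> 0) by lra. revert H. unfold E. intro H. field. repeat split; try lra. apply Rgt_not_eq. assert (0 < (1 - y) * ((-1 - xt) * x)) by (apply Rmult_lt_0_compat; nra). assert (0 < (y - x) * (xt * (-1 - x))) by (apply Rmult_lt_0_compat; nra). lra. }
  assert (Q1 : 0 < (y - x) / (- x - y)) by (apply Rdiv_lt_0_compat; lra).
  assert (Q2 : 0 < (xt - 1) / (-1 - xt)) by (replace ((xt - 1) / (-1 - xt)) with ((1-xt)/(1+xt)) by (field; lra); apply Rdiv_lt_0_compat; lra).
  assert (Q3 : 0 < (x - 1) / (-1 - x)) by (replace ((x - 1) / (-1 - x)) with ((1-x)/(1+x)) by (field; lra); apply Rdiv_lt_0_compat; lra).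
  rewrite (lnsub _ _ P1 Q1), (lnsub _ _ Q2 Q3). f_equal.
  assert (1 + E <> 0) by lra. revert H. unfold E. intro H. field.
  repeat split; try lra.
  - apply Rgt_not_eq. assert (0 < (1 - y) * ((-1 - xt) * x)) by (apply Rmult_lt_0_compat; nra). assert (0 < (y - x) * (xt * (-1 - x))) by (apply Rmult_lt_0_compat; nra). lra.
  - match goal with |- ?e <> 0 => replace e with (xt * (1 + xt) * (x + y) * (1 - x)) by ring end.
    apply Rmult_integral_contrapositive; split; [|lra].
    apply Rmult_integral_contrapositive; split; [|lra].
    apply Rmult_integral_contrapositive; split; lra.
  - lra.
  - apply Rinv_0_lt_compat; lra.
  - apply Rinv_0_lt_compat; auto.
Qed.
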